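(* Let $A$ be a set of regular cardinals without a maximum, and let $\kappa\in\operatorname{spec}(A)$ with $\kappa\geq\sup(A)$. Let $\mathcal{F}\subseteq\prod A$ be any set of size $\kappa$ such that every $\kappa$-sized subset of $\mathcal{F}$ is unbounded in $(\prod A,<)$. Then for every $\mathcal{F}_0\subseteq\mathcal{F}$ of size $\kappa$, the set $\operatorname{ub}(\mathcal{F}_0)$ is infinite.
   Context: $\prod A$ is the set of functions $f$ on $A$ with $f(a)\in a$, ordered pointwise ($f<g$ iff $f(a)<g(a)$ for all $a\in A$). $\operatorname{spec}(A)$ is the set of regular $\lambda$ for which some $\mathcal{F}\subseteq\prod A$ of size $\lambda$ has every $\lambda$-sized subset unbounded in $(\prod A,<)$. For $\mathcal{G}\subseteq\prod A$, $\operatorname{ub}(\mathcal{G})$ is the set of $a\in A$ such that $\{f(a):f\in\mathcal{G}\}$ is unbounded in $a$. *)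

(* Defs.v *)
From HB Require Import structures.
From mathcomp Require Import all_boot all_order.
From mathcomp Require Import boolp classical_sets functions cardinality.
Set Implicit Arguments. Unset Strict Implicit. Unset Printing Implicit Defensive.
Local Open Scope classical_set_scope.
Local Open Scope card_scope.

(* Ordinals are modelled as elements of a type [O] carrying a strict
   well-order [lt]; an ordinal [a] is identified with the set of its
   predecessors [seg lt a]. *)
Record well_order (O : Type) (lt : O -> O -> Prop) : Prop := WellOrder {
  wo_irrefl : forall x, ~ lt x x;
  wo_trans : forall x y z, lt x y -> lt y z -> lt x z;
  wo_total : forall x y, lt x y \/ x = y \/ lt y x;
  wo_wf : well_founded lt }.

Section Defs.
Variables (O : Type) (lt : O -> O -> Prop).

Definition le (x y : O) := lt x y \/ x = y.

Definition seg (a : O) : set O := [set x | lt x a].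

Definition is_cardinal (a : O) := forall b, lt b a -> ~ (seg b #= seg a).

Definition regular (a : O) :=
  [/\ is_cardinal a, infinite_set (seg a) &
      forall X : set O, X `<=` seg a ->
        (forall y, lt y a -> exists2 x, X x & le y x) -> X #= seg a].

(* prod A: functions f with f a \in a for a \in A; f is normalised to be
   the identity outside A so that elements of prod A are determined by
   their values on A. *)
Definition prodA (A : set O) : set (O -> O) :=
  [set f | forall a, (A a -> lt (f a) a) /\ (~ A a -> f a = a)].

Definition ltA (A : set O) (f g : O -> O) := forall a, A a -> lt (f a) (g a).

Definition unbounded_prod (A : set O) (G : set (O -> O)) :=
  ~ (exists2 h, prodA A h & forall g, G g -> ltA A g h).

Definition spec (A : set O) : set O :=
  [set lam | regular lam /\
     exists2 F : set (O -> O), F `<=` prodA A /\ F #= seg lam &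
       forall G, G `<=` F -> G #= seg lam -> unbounded_prod A G].

Definition ub (A : set O) (G : set (O -> O)) : set O :=
  [set a | A a /\ forall b, lt b a -> exists2 f, G f & lt b (f a)].

End Defs.

(* Main.v *)
Require Import Defs.
From HB Require Import structures.
From mathcomp Require Import all_boot all_order.
From mathcomp Require Import boolp classical_sets functions cardinality.
Local Open Scope classical_set_scope.
Local Open Scope card_scope.

Lemma card_le_fun {T U} {A : set T} {B : set U} : A #<= B -> A !=set0 ->
  exists f : T -> U, (forall x, A x -> B (f x)) /\ {in A &, injective f}.
Proof.
elim/Ppointed: U => U in B *.
  rewrite card_le_emptyr => /eqP -> [x]; rewrite (empty_eq0 B)=> -[].
move=> /pcard_leP[f] _; exists f; split.
  by move=> x Ax; apply: funS.
exact: (@inj _ _ _ f).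
Qed.

Lemma regular_bounded (O : Type) (lt : O -> O -> Prop) (wo : well_order lt) k : regular lt k ->
  forall Y : set O, Y `<=` seg lt k -> ~ (Y #= seg lt k) ->
  exists2 y, lt y k & forall x, Y x -> lt x y.
Proof.
move=> [_ _ Hr] Y YS NY.
have : ~ (forall y, lt y k -> exists2 x, Y x & le lt y x) by move=> /(Hr _ YS).
move=> /existsNP[y] /not_implyP[yk Hy]; exists y => // x Yx.
have [|[|]] := wo_total wo x y => // E.
  by exfalso; apply: Hy; exists x => //; right.
by exfalso; apply: Hy; exists x => //; left.
Qed.

Lemma regular_succ (O : Type) (lt : O -> O -> Prop) (wo : well_order lt) a b : regular lt a -> lt b a ->
  exists c, lt b c /\ lt c a.
Proof.
move=> [ca inf Hr] ba; apply: contrapT => Hn.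
have : [set b] #= seg lt a.
  apply: Hr; first by move=> x ->.
  move=> y ya; exists b => //.
  have [|[|]] := wo_total wo y b; [by left|by right|] => by_.
  by exfalso; apply: Hn; exists y.
by move/eq_finite_set => E; apply: inf; rewrite -E.
Qed.
Lemma pigeon (O : Type) (lt : O -> O -> Prop) (wo : well_order lt) k :
  regular lt k -> forall a, lt a k -> forall G : set (O -> O),
  G #= seg lt k -> (forall g, G g -> lt (g a) a) ->
  exists x, [set g | G g /\ g a = x] #= seg lt k.
Proof.
move=> Hk a ak G GK Ga; apply: contrapT => /forallNP Hn.
have [ck infk _] := Hk.
have [GleK KleG] := (proj1 (card_eqPle _ _) GK).
have [h [hG hinj]] := card_le_fun KleG (infinite_setN0 infk).
pose I x := [set y | seg lt k y /\ h y a = x].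
have NI : forall x, ~ (I x #= seg lt k).
  move=> x IK; apply: (Hn x); apply: Cantor_Bernstein.
    apply: card_le_trans GleK; apply: subset_card_le => g [] //.
  have [_ KI] := (proj1 (card_eqPle _ _) IK).
  apply: (card_le_trans KI); apply: (card_le_trans (B := h @` I x)).
    have /card_eqPle[] : h @` I x #= I x.
      apply: inj_card_eq => y z /set_mem [yk _] /set_mem [zk _].
      by apply: hinj; apply/mem_set.
    by [].
  apply: subset_card_le => _ [y [yk <-] <-]; split => //; exact: hG.
have : forall x, exists y, lt y k /\ forall z, I x z -> lt z y.
  move=> x; have [y yk Hy] := @regular_bounded _ _ wo _ Hk (I x)
    (fun z (Iz : I x z) => proj1 Iz) (NI x).
  by exists y.
move=> /choice[beta Hbeta].
have BS : beta @` seg lt a `<=` seg lt k.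
  by move=> _ [x _ <-]; have [] := Hbeta x.
have [] := @regular_bounded _ _ wo _ Hk (beta @` seg lt a) BS.
  move=> BK; apply: (ck a ak); apply: Cantor_Bernstein.
    by apply: subset_card_le => z za; apply: (wo_trans wo za ak).
  have [_ KB] := (proj1 (card_eqPle _ _) BK).
  exact: (card_le_trans KB (card_image_le _ _)).
move=> gam gk Hg.
have hga : lt (h gam a) a by apply: Ga; apply: hG.
have Igam : I (h gam a) gam by split.
have [_ /(_ _ Igam) lt1] := Hbeta (h gam a).
have lt2 : lt (beta (h gam a)) gam by apply: Hg; exists (h gam a).
exact: (wo_irrefl wo (wo_trans wo lt1 lt2)).
Qed.
Theorem lemma5p1 (O : Type) (lt : O -> O -> Prop) (wo : well_order lt)
  (A : set O) (A_reg : forall a, A a -> regular lt a)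
  (A_nomax : ~ (exists2 m, A m & forall a, A a -> le lt a m))
  (kappa : O) (k_spec : spec lt A kappa)
  (k_ge_sup : forall a, A a -> le lt a kappa)
  (F : set (O -> O)) (F_prod : F `<=` prodA lt A) (F_size : F #= seg lt kappa)
  (F_unb : forall G, G `<=` F -> G #= seg lt kappa -> unbounded_prod lt A G) :
  forall F0 : set (O -> O), F0 `<=` F -> F0 #= seg lt kappa ->
    infinite_set (ub lt A F0).
Proof.
have Hk : regular lt kappa by case: k_spec.
have Aval : forall g a, F g -> A a -> lt (g a) a.
  by move=> g a /F_prod /(_ a) [+ _]; apply.
have Ak : forall a, A a -> lt a kappa.
  move=> a Aa; apply: contrapT => Hn; apply: A_nomax; exists a => // b Ab.
  have [|[|]] := wo_total wo b a; [by left|by right|] => ab.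
  have [bk|bk] := k_ge_sup b Ab.
    by exfalso; apply: Hn; apply: (wo_trans wo ab bk).
  by exfalso; apply: Hn; rewrite -bk.
have base : forall G, G `<=` F -> G #= seg lt kappa -> ub lt A G `<=` set0 -> False.
  move=> G GF GK Hub; apply: (F_unb G GF GK).
  have : forall a, exists c, (A a -> lt c a /\ forall f, G f -> lt (f a) c) /\
                             (~ A a -> c = a).
    move=> a; have [Aa|nAa] := pselect (A a); last by exists a.
    have : ~ (forall b, lt b a -> exists2 f, G f & lt b (f a)).
      by move=> H; apply: (Hub a); split.
    move=> /existsNP[b] /not_implyP[ba Hb].
    have [c [bc ca]] := @regular_succ _ _ wo _ _ (A_reg a Aa) ba.
    exists c; split => // _; split => // f Gf.
    have [|[|]] := wo_total wo (f a) b => E.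
    - exact: (wo_trans wo E bc).
    - by rewrite E.
    - by exfalso; apply: Hb; exists f.
  move=> /choice[h Hh]; exists h.
    by move=> a; have [H1 H2] := Hh a; split => // /H1 [].
  by move=> g Gg a Aa; have [/(_ Aa) [_ H] _] := Hh a; exact: H.
have ind : forall n G S, G `<=` F -> G #= seg lt kappa -> S #= `I_n ->
    ub lt A G `<=` S -> False.
  elim=> [|n IH] G S GF GK SI Hub.
    apply: (base G GF GK) => x /Hub Sx.
    have : S #<= @set0 nat.
      have -> : @set0 nat = `I_0 by apply/seteqP; split => y //=.
      by have [] := proj1 (card_eqPle _ _) SI.
    by move/card_le0P => S0; rewrite S0 in Sx.
  have [x Sx SxI] := eq_cardSP S n SI.
  have [Ax|nAx] := pselect (A x); last first.
    apply: (IH G (S `\ x) GF GK SxI) => y Uy; split; first exact: Hub.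
    by move=> /= yx; apply: nAx; rewrite -yx; case: Uy.
  have [c Hc] := @pigeon _ _ wo _ Hk _ (Ak x Ax) _ GK (fun g Gg => Aval g x (GF g Gg) Ax).
  apply: (IH _ (S `\ x) _ Hc SxI).
    by move=> g [Gg _]; exact: GF.
  move=> y [Ay Hy]; split.
    apply: Hub; split => // b ba; have [f [Gf _] bf] := Hy b ba.
    by exists f.
  move=> /= yx; rewrite yx in Hy.
  have [_ infx _] := A_reg x Ax.
  have [b bx] := infinite_setN0 infx.
  have [f [Gf fx] bf] := Hy b bx.
  have cx : lt c x by rewrite -fx; apply: Aval => //; apply: GF.
  have [f' [Gf' f'x] cf'] := Hy c cx.
  by rewrite f'x in cf'; apply: (wo_irrefl wo cf').
move=> F0 F0F F0K [n Hn].
exact: (ind n F0 _ F0F F0K Hn (fun y (h : ub lt A F0 y) => h)).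
Qed.
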